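(* Let $\mathbf X=\{X(\tilde r)\}_{\tilde r\in\mathbb N_0^d}$ be an $\mathbf F$-supermartingale, $\tilde s\in\mathbb N_0^d$, and $\tilde T\in\mathcal A(\tilde s)$. Then $\{X(\tilde T(t))\}_{t\in\mathbb N_0}$ is an $\mathbf F(\tilde T)$-supermartingale.
   Context: $(\Omega,\mathcal F,\mathbb P)$ complete; $\mathbf F=\{\mathcal F(\tilde s)\}_{\tilde s\in\mathbb N_0^d}$ satisfies (F1) monotonicity in the componentwise order, (F2) $\mathcal F(\tilde 0)$ contains all null sets, (F4) $\mathcal F(\tilde s),\mathcal F(\tilde r)$ conditionally independent given $\mathcal F(\tilde s\wedge\tilde r)$. $\mathbf X$ is an $\mathbf F$-supermartingale if each $X(\tilde s)$ is integrable, $\mathcal F(\tilde s)$-measurable, and $\mathbb E[X(\tilde r)\mid\mathcal F(\tilde s)]\le X(\tilde s)$ a.s. for $\tilde s\le\tilde r$. An allocation strategy for $\tilde s$ is an $\mathbb N_0^d$-valued $\{\tilde T(t)\}_{t\in\mathbb N_0}$ with $\tilde T(0)=\tilde s$, $\tilde T(t+1)=\tilde T(t)+\tilde e_j$ for some $j$ ($\tilde e_j$ unit vectors), and $\{\tilde T(t+1)=\tilde T(t)+\tilde e_j,\ \tilde T(t)=\tilde r\}\in\mathcal F(\tilde r)$; $\mathcal A(\tilde s)$ is their set. For a stopping point $\tilde\nu$ (i.e. $\{\tilde\nu=\tilde r\}\in\mathcal F(\tilde r)$ for all $\tilde r$), $\mathcal F(\tilde\nu):=\{A:A\cap\{\tilde\nu=\tilde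 r\}\in\mathcal F(\tilde r)\ \forall\tilde r\}$; $\mathbf F(\tilde T):=\{\mathcal F(\tilde T(t))\}_{t\in\mathbb N_0}$. *)

(* Defs.v *)
From HB Require Import structures.
From mathcomp Require Import all_boot all_order all_algebra.
From mathcomp Require Import all_classical all_reals all_analysis.
Set Implicit Arguments. Unset Strict Implicit. Unset Printing Implicit Defensive.
Import Order.TTheory GRing.Theory Num.Theory.
Local Open Scope classical_set_scope.
Local Open Scope ring_scope.

Section Defs.
Context {dT : measure_display} {T : measurableType dT} {R : realType}.
Variable P : probability T R.

Definition sub_sigma_algebra (G : set (set T)) : Prop :=
  sigma_algebra setT G /\ (forall A, G A -> measurable A).

Definition measurable_wrt (G : set (set T)) (f : T -> R) : Prop :=
  forall B : set R, measurable B -> G (f @^-1` B).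

Definition is_cond_exp (G : set (set T)) (Y Z : T -> R) : Prop :=
  [/\ measurable_wrt G Z, P.-integrable setT (EFin \o Z) &
      forall A, G A -> (\int[P]_(x in A) (Z x)%:E = \int[P]_(x in A) (Y x)%:E)%E].

Definition ind (A : set T) : T -> R := fun x => if `[< A x >] then 1 else 0.

Definition cond_indep (G1 G2 H : set (set T)) : Prop :=
  forall A B, G1 A -> G2 B ->
  forall ZA ZB ZAB, is_cond_exp H (ind A) ZA -> is_cond_exp H (ind B) ZB ->
    is_cond_exp H (ind (A `&` B)) ZAB ->
    {ae P, forall x, ZAB x = ZA x * ZB x}.

Definition supermartingale (I : Type) (le : I -> I -> Prop)
    (F : I -> set (set T)) (X : I -> T -> R) : Prop :=
  [/\ (forall i, P.-integrable setT (EFin \o X i)),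
      (forall i, measurable_wrt (F i) (X i)) &
      (forall i j, le i j -> forall Z, is_cond_exp (F i) (X j) Z ->
         {ae P, forall x, Z x <= X i x})].
End Defs.

Definition mindex (d : nat) := 'I_d -> nat.
Definition mle (d : nat) (s r : mindex d) : Prop := forall i, (s i <= r i)%N.
Definition mmeet (d : nat) (s r : mindex d) : mindex d := fun i => minn (s i) (r i).
Definition mindex0 (d : nat) : mindex d := fun _ => 0%N.
Definition unitv (d : nat) (j : 'I_d) : mindex d := fun i => nat_of_bool (i == j).
Definition madd (d : nat) (s r : mindex d) : mindex d := fun i => (s i + r i)%N.

Definition mfiltration {dT : measure_display} {T : measurableType dT} {R : realType}
  (P : probability T R) (d : nat) (F : mindex d -> set (set T)) : Prop :=
  [/\ (forall s, sub_sigma_algebra (F s)),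
      (* F1 *) (forall s r, mle s r -> F s `<=` F r),
      (* F2 *) (forall N, P.-negligible N -> F (@mindex0 d) N) &
      (* F4 *) (forall s r, cond_indep P (F s) (F r) (F (mmeet s r)))].

Definition allocation {dT : measure_display} {T : measurableType dT} (d : nat)
  (F : mindex d -> set (set T)) (s : mindex d) (Tt : nat -> T -> mindex d) : Prop :=
  [/\ (forall w, Tt 0%N w = s),
      (forall t w, exists j, Tt t.+1 w = madd (Tt t w) (unitv j)) &
      (forall t j r, F r [set w | Tt t.+1 w = madd (Tt t w) (unitv j) /\ Tt t w = r])].

Definition stopped_sigma {T : Type} (d : nat) (F : mindex d -> set (set T))
  (nu : T -> mindex d) : set (set T) :=
  [set A | forall r, F r (A `&` [set w | nu w = r])].

(* Main.v *)
Require Import Defs.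
From HB Require Import structures.
From mathcomp Require Import all_boot all_order all_algebra.
From mathcomp Require Import all_classical all_reals all_analysis.
From mathcomp Require Import measurable_realfun.
Set Implicit Arguments. Unset Strict Implicit. Unset Printing Implicit Defensive.
Import Order.TTheory GRing.Theory Num.Theory.
Local Open Scope classical_set_scope.
Local Open Scope ring_scope.

Definition idG {T : Type} (G : set (set T)) : T -> g_sigma_algebraType G := id.

Section condexp.
Context {dT : measure_display} {T : measurableType dT} {R : realType}.
Variable P : probability T R.
Variable G : set (set T).
Hypothesis HG : Defs.sub_sigma_algebra G.

Lemma measurableGE : G.-sigma.-measurable = G.
Proof. by apply: measurable_g_measurableTypeE; case: HG. Qed.

Lemma mid : measurable_fun [set: T] (idG G).
Proof.
move=> _ A; rewrite measurableGE => GA; rewrite setTI; by case: HG => _; apply.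
Qed.

HB.instance Definition _ := isMeasurableFun.Build _ _ _ _ (idG G) mid.

Let mu := distribution P (idG G).

Variable Y : T -> R.
Hypothesis intY : P.-integrable setT (EFin \o Y).

Lemma dom_ind : induced_charge intY `<< P.
Proof.
apply/null_content_dominatesP => /= A mA muA.
have mY := measurable_int P intY.
rewrite /induced_charge; apply/eqP; rewrite -abse_eq0 eq_le abse_ge0 andbT.
rewrite (le_trans (le_abse_integral _ _ _))//=.
  exact: measurable_funTS mY.
rewrite le_eqVlt; apply/orP; left; apply/eqP.
apply: null_set_integral => //=.
apply/measurable_EFinP; apply: measurableT_comp => //.
apply/measurable_EFinP; exact: measurable_funTS mY.
Qed.

Lemma cond_exp_exists : exists Z, is_cond_exp P G Y Z.
Proof.
pose nu := measure_function_pushforward__canonical__charge_Charge (induced_charge intY) mid.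
have numu : nu `<< mu := dominates_pushforward mid dom_ind.
pose f := Radon_Nikodym nu mu.
have fin x : f x \is a fin_num by exact: Radon_Nikodym_fin_num.
have intf : mu.-integrable setT f by exact: Radon_Nikodym_integrable.
have mf : measurable_fun setT f by exact: measurable_int intf.
have mfT : measurable_fun [set: T] (f \o idG G) by exact: measurableT_comp mf mid.
have intfT : P.-integrable [set: T] (f \o idG G).
  apply/integrableP; split => //.
  have := intf; move/integrableP => [_].
  rewrite ge0_integral_pushforward //.
  exact: measurableT_comp.
exists (fun x => fine (f x)); split.
- move=> B mB.
  have mZ : measurable_fun [set: g_sigma_algebraType G] (fine \o f).
    apply: measurableT_comp => //; exact: fine_measurable.
  have := mZ measurableT B mB; rewrite measurableGE setTI //.
- have -> : EFin \o (fun x => fine (f x)) = f \o idG G.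
    by apply/funext => x /=; rewrite fineK.
  exact: intfT.
- move=> A GA.
  have mA : G.-sigma.-measurable A by rewrite measurableGE.
  transitivity (\int[P]_(x in A) (f \o idG G) x)%E.
    by apply: eq_integral => x _ /=; rewrite fineK.
  have intfA : P.-integrable (idG G @^-1` A) (f \o idG G).
    apply: (integrableS measurableT _ _ intfT) => //.
    by have := mid measurableT mA; rewrite setTI.
  rewrite -(integral_pushforward mid mf intfA mA).
  change (\int[mu]_(y in A) f y = \int[P]_(x in A) (Y x)%:E)%E.
  rewrite -(Radon_Nikodym_integral numu mA).
  by [].
Qed.

End condexp.

Section gen.
Context {dT : measure_display} {T : measurableType dT} {R : realType}.
Variable P : probability T R.

Lemma GmE (G : set (set T)) (HG : Defs.sub_sigma_algebra G) A :
  G A <-> G.-sigma.-measurable (A : set (g_sigma_algebraType G)).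
Proof. by rewrite (measurableGE HG). Qed.

Lemma G_meas (G : set (set T)) (HG : Defs.sub_sigma_algebra G) A :
  G A -> measurable A.
Proof. by case: HG => _; apply. Qed.

Lemma GI (G : set (set T)) (HG : Defs.sub_sigma_algebra G) A B :
  G A -> G B -> G (A `&` B).
Proof. by rewrite !(GmE HG) => mA mB; exact: measurableI. Qed.

Lemma G0 (G : set (set T)) (HG : Defs.sub_sigma_algebra G) : G set0.
Proof. by rewrite (GmE HG). Qed.

Lemma Gfin (G : set (set T)) (HG : Defs.sub_sigma_algebra G) (I : finType)
  (A : I -> set T) : (forall i, G (A i)) -> G (\bigcup_(i in [set: I]) A i).
Proof.
move=> hA; rewrite (GmE HG); apply: fin_bigcup_measurable.
  exact: finite_finset.
by move=> i _; rewrite -(GmE HG).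
Qed.

Lemma GD (G : set (set T)) (HG : Defs.sub_sigma_algebra G) A B :
  G A -> G B -> G (A `\` B).
Proof. by rewrite !(GmE HG) => mA mB; exact: measurableD. Qed.

Lemma GU (G : set (set T)) (HG : Defs.sub_sigma_algebra G) (A : (set T)^nat) :
  (forall n, G (A n)) -> G (\bigcup_n A n).
Proof.
move=> hA; rewrite (GmE HG); apply: bigcupT_measurable => n.
by rewrite -(GmE HG).
Qed.

Lemma wrt_TG (G : set (set T)) (HG : Defs.sub_sigma_algebra G) (f : T -> R) :
  measurable_wrt G f -> measurable_fun [set: g_sigma_algebraType G] f.
Proof. by move=> mf _ B mB; rewrite setTI -(GmE HG); exact: mf. Qed.

Lemma le_int_of_super (G : set (set T)) (HG : Defs.sub_sigma_algebra G)
  (Y X0 : T -> R) (intY : P.-integrable setT (EFin \o Y))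
  (intX0 : P.-integrable setT (EFin \o X0)) :
  (forall Z, is_cond_exp P G Y Z -> {ae P, forall x, Z x <= X0 x}) ->
  forall A, G A ->
  (\int[P]_(x in A) (Y x)%:E <= \int[P]_(x in A) (X0 x)%:E)%E.
Proof.
move=> H A GA.
have [Z cZ] := cond_exp_exists HG intY.
have mA := G_meas HG GA.
have [_ intZ eqZ] := cZ.
rewrite -(eqZ A GA).
have [N [mN PN sub]] := H Z cZ.
have mAN : measurable (A `\` N) by exact: measurableD.
rewrite (negligible_integral mN mA (integrableS measurableT mA (@subsetT _ _) intZ) PN).
rewrite [X in (_ <= X)%E](negligible_integral mN mA (integrableS measurableT mA (@subsetT _ _) intX0) PN).
apply: le_integral => //.
- exact: (integrableS measurableT mAN (@subsetT _ _) intZ).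
- exact: (integrableS measurableT mAN (@subsetT _ _) intX0).
move=> x /set_mem [_ Nx]; rewrite lee_fin.
apply: contrapT => hx; apply: Nx; apply: sub; exact: hx.
Qed.

End gen.

Section main.
Context (dT : measure_display) (T : measurableType dT) (R : realType)
  (P : probability T R) (d : nat) (F : mindex d -> set (set T))
  (X : mindex d -> T -> R) (s : mindex d) (Tt : nat -> T -> mindex d).
Hypothesis HF : mfiltration P F.
Hypothesis HX : supermartingale P (@mle d) F X.
Hypothesis HT : allocation F s Tt.

Let Fsub r : Defs.sub_sigma_algebra (F r). Proof. by case: HF. Qed.
Let Fmono r r' : mle r r' -> F r `<=` F r'. Proof. by case: HF => _ + _ _; apply. Qed.
Let intX r : P.-integrable setT (EFin \o X r). Proof. by case: HX. Qed.
Let measX r : measurable_wrt (F r) (X r). Proof. by case: HX. Qed.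
Let supX r r' : mle r r' -> forall Z, is_cond_exp P (F r) (X r') Z ->
  {ae P, forall x, Z x <= X r x}.
Proof. by case: HX => _ _; apply. Qed.
Let T0 w : Tt 0%N w = s. Proof. by case: HT. Qed.
Let Tstep t w : exists j, Tt t.+1 w = madd (Tt t w) (unitv j). Proof. by case: HT. Qed.
Let Tmeas t j r : F r [set w | Tt t.+1 w = madd (Tt t w) (unitv j) /\ Tt t w = r].
Proof. by case: HT. Qed.

Lemma Tbound t w i : (Tt t w i <= s i + t)%N.
Proof.
elim: t => [|t IH]; first by rewrite T0 addn0.
have [j ->] := Tstep t w; rewrite /madd /unitv.
by rewrite addnS -addn1 leq_add // leq_b1.
Qed.

Definition Mb t := (\sum_(i < d) s i + t).+1.
Definition Bx t := {ffun 'I_d -> 'I_(Mb t)}.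
Definition rv t (σ : Bx t) : mindex d := fun i => nat_of_ord (σ i).

Lemma Tbox t w : exists σ : Bx t, Tt t w = rv σ.
Proof.
exists [ffun i => inord (Tt t w i)]; apply: funext => i.
rewrite /rv ffunE inordK // ltnS.
apply: leq_trans (Tbound t w i) _; rewrite leq_add2r.
by rewrite (bigD1 i) //= leq_addr.
Qed.

Lemma rv_inj t : injective (@rv t).
Proof.
move=> σ σ' E; apply/ffunP => i; apply: val_inj.
exact: (congr1 (fun f => f i) E).
Qed.

Lemma madd_unit_inj (r : mindex d) j j' :
  madd r (unitv j) = madd r (unitv j') -> j = j'.
Proof.
move=> /(congr1 (fun f => f j)); rewrite /madd /unitv eqxx => /addnI.
by case: eqP.
Qed.

Lemma mle_madd (r : mindex d) j : mle r (madd r (unitv j)).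
Proof. by move=> i; rewrite /madd leq_addr. Qed.

Lemma Teq_F t r : F r [set w | Tt t w = r].
Proof.
have -> : [set w | Tt t w = r] =
  \bigcup_(j in [set: 'I_d]) [set w | Tt t.+1 w = madd (Tt t w) (unitv j) /\ Tt t w = r].
  apply/seteqP; split => w /=.
    by move=> Hw; have [j Hj] := Tstep t w; exists j.
  by case=> j _ [].
by apply: Gfin => //; exact: Fsub.
Qed.

Let ft t := fun w => X (Tt t w) w.
Let Gt t := stopped_sigma F (Tt t).

Lemma Gt_meas t A : Gt t A -> measurable A.
Proof.
move=> HA.
have -> : A = \bigcup_(σ in [set: Bx t]) (A `&` [set w | Tt t w = rv σ]).
  apply/seteqP; split => w /=.
    by move=> Aw; have [σ Hσ] := Tbox t w; exists σ.
  by case=> σ _ [].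
apply: fin_bigcup_measurable; first exact: finite_finset.
by move=> σ _; exact: (G_meas (Fsub _) (HA (rv σ))).
Qed.

Lemma Gt_sub t : Defs.sub_sigma_algebra (Gt t).
Proof.
split; last exact: Gt_meas.
split.
- by move=> r; rewrite set0I; exact: (G0 (Fsub r)).
- move=> A HA r.
  have -> : ([set: T] `\` A) `&` [set w | Tt t w = r] =
      [set w | Tt t w = r] `\` (A `&` [set w | Tt t w = r]).
    apply/seteqP; split => w /=.
      by case=> [[_ nA] e]; split => // -[].
    by case=> e nA; split => //; split => // Aw; apply: nA.
  by apply: (GD (Fsub r)); [exact: Teq_F | exact: HA].
- move=> A HA r; rewrite setI_bigcupl.
  by apply: (GU (Fsub r)) => n; exact: HA.
Qed.

Lemma f_wrt t : measurable_wrt (Gt t) (ft t).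
Proof.
move=> B mB r.
have -> : ft t @^-1` B `&` [set w | Tt t w = r] =
    X r @^-1` B `&` [set w | Tt t w = r].
  by apply/seteqP; split => w /= [h e]; split => //; rewrite /ft e in h *.
apply: (GI (Fsub r)); [exact: measX | exact: Teq_F].
Qed.

Lemma f_meas t : measurable_fun setT (ft t).
Proof. by move=> _ B mB; rewrite setTI; apply: (@Gt_meas t); exact: f_wrt. Qed.

Lemma f_int t : P.-integrable setT (EFin \o ft t).
Proof.
apply: (@le_integrable _ _ _ P _ measurableT _ _ _ _ (@integrable_sum _ _ _ P _ measurableT _ (index_enum (Bx t)) xpredT
   (fun σ => EFin \o (Num.norm \o X (rv σ))) _)).
- by apply/measurable_EFinP; exact: f_meas.
- move=> w _; have [σ0 Hσ] := Tbox t w.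
  rewrite /= /ft Hσ.
  rewrite [X in (_ <= X)%E]gee0_abs; last by apply: sume_ge0 => σ _; rewrite lee_fin.
  rewrite (bigD1 σ0) //= -[leLHS]adde0 leeD //.
  by apply: sume_ge0 => σ _; rewrite lee_fin.
- move=> σ _; apply: integrable_norm; exact: intX.
Qed.

Lemma Gt_mono t : Gt t `<=` Gt t.+1.
Proof.
move=> A HA r'.
have -> : A `&` [set w | Tt t.+1 w = r'] =
  \bigcup_(k in [set: (Bx t * 'I_d)%type]) (A `&` [set w | Tt t w = rv k.1] `&`
    [set w | Tt t.+1 w = madd (Tt t w) (unitv k.2) /\ Tt t w = rv k.1] `&`
    [set w | Tt t.+1 w = r']).
  apply/seteqP; split => w /=.
    case=> Aw e; have [σ Hσ] := Tbox t w; have [j Hj] := Tstep t w.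
    by exists (σ, j).
  by case=> k _ [[[Aw _] _] e].
apply: (Gfin (Fsub r')) => k.
case: (pselect (madd (rv k.1) (unitv k.2) = r')) => [E|NE].
- rewrite -E; apply: (GI (Fsub _)); last exact: Teq_F.
  apply: (GI (Fsub _)).
    by apply: (Fmono (mle_madd _ _)); exact: HA.
  by apply: (Fmono (mle_madd _ _)); exact: Tmeas.
- have -> : A `&` [set w | Tt t w = rv k.1] `&`
    [set w | Tt t.+1 w = madd (Tt t w) (unitv k.2) /\ Tt t w = rv k.1] `&`
    [set w | Tt t.+1 w = r'] = set0.
    apply/seteqP; split => w //= [[[_ _] [Hj e1]] e2].
    by apply: NE; rewrite -e2 Hj e1.
  exact: (G0 (Fsub r')).
Qed.

Lemma Gt_monoN t n : Gt t `<=` Gt (t + n).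
Proof.
elim: n => [|n IH]; first by rewrite addn0.
by move=> A HA; rewrite addnS; apply: Gt_mono; exact: IH.
Qed.

Lemma step_le t A : Gt t A ->
  (\int[P]_(x in A) (ft t.+1 x)%:E <= \int[P]_(x in A) (ft t x)%:E)%E.
Proof.
move=> HA; have mA := Gt_meas HA.
pose Q (k : (Bx t * 'I_d)%type) := A `&`
  [set w | Tt t.+1 w = madd (Tt t w) (unitv k.2) /\ Tt t w = rv k.1].
have QF k : F (rv k.1) (Q k).
  have -> : Q k = A `&` [set w | Tt t w = rv k.1] `&`
      [set w | Tt t.+1 w = madd (Tt t w) (unitv k.2) /\ Tt t w = rv k.1].
    apply/seteqP; split => w /=; first by case=> Aw [e1 e2].
    by case=> -[Aw _] e.
  by apply: (GI (Fsub _)); [exact: HA | exact: Tmeas].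
have mQ k : measurable (Q k) := G_meas (Fsub _) (QF k).
have AE : A = \big[setU/set0]_(k <- index_enum (Bx t * 'I_d)%type) Q k.
  rewrite -bigcup_seq; apply/seteqP; split => w /=.
    move=> Aw; have [σ Hσ] := Tbox t w; have [j Hj] := Tstep t w.
    exists (σ, j); first by rewrite /= mem_index_enum.
    by split => //; rewrite /= Hj Hσ.
  by case=> k _ [].
have uE : uniq (index_enum (Bx t * 'I_d)%type) by exact: index_enum_uniq.
have tQ : trivIset [set` index_enum (Bx t * 'I_d)%type] Q.
  apply/trivIsetP => -[σ j] [σ' j'] _ _ /eqP kk'; apply/seteqP; split => w //=.
  case=> -[_ [H1 H2]] [_ [H1' H2']]; apply: kk'.
  have eσ : σ = σ' by apply: (@rv_inj t); rewrite -H2 -H2'.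
  subst σ'; congr pair; apply: (madd_unit_inj (r := Tt t w)).
  by rewrite -H1 -H1'.
have mf1 : measurable_fun A (EFin \o ft t.+1).
  by apply/measurable_EFinP; apply: measurable_funTS; exact: f_meas.
have mf0 : measurable_fun A (EFin \o ft t).
  by apply/measurable_EFinP; apply: measurable_funTS; exact: f_meas.
rewrite AE in mf1 mf0 *.
rewrite (integral_bigsetU_EFin P mQ uE tQ mf1).
rewrite (integral_bigsetU_EFin P mQ uE tQ mf0).
apply: lee_sum => k _.
have -> : (\int[P]_(x in Q k) (ft t.+1 x)%:E =
    \int[P]_(x in Q k) (X (madd (rv k.1) (unitv k.2)) x)%:E)%E.
  by apply: eq_integral => w /set_mem [_ [H1 H2]]; rewrite /ft H1 H2.
have -> : (\int[P]_(x in Q k) (ft t x)%:E =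
    \int[P]_(x in Q k) (X (rv k.1) x)%:E)%E.
  by apply: eq_integral => w /set_mem [_ [H1 H2]]; rewrite /ft H2.
apply: (le_int_of_super (Fsub (rv k.1)) (intX _) (intX _)) => //.
exact: supX (mle_madd _ _).
Qed.

Lemma multi_le t n A : Gt t A ->
  (\int[P]_(x in A) (ft (t + n) x)%:E <= \int[P]_(x in A) (ft t x)%:E)%E.
Proof.
move=> HA; elim: n => [|n IH]; first by rewrite addn0.
rewrite addnS; apply: le_trans IH; apply: step_le; exact: Gt_monoN.
Qed.

Lemma final_ae t u : (t <= u)%N -> forall Z,
  is_cond_exp P (Gt t) (ft u) Z -> {ae P, forall x, Z x <= ft t x}.
Proof.
move=> tu Z [mZ intZ eqZ].
have HG := Gt_sub t.
pose A := [set w | ft t w < Z w].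
have GA : Gt t A.
  rewrite (GmE HG).
  have mt : measurable [set true] by [].
  have := measurable_fun_ltr (wrt_TG HG (f_wrt t)) (wrt_TG HG mZ) measurableT mt.
  rewrite setTI; congr (_ _); apply/seteqP; split => w //=.
have mA := Gt_meas GA.
have intZA : P.-integrable A (EFin \o Z) := integrableS measurableT mA (@subsetT _ _) intZ.
have intfA : P.-integrable A (EFin \o ft t) := integrableS measurableT mA (@subsetT _ _) (f_int t).
have le1 : (\int[P]_(x in A) ((Z x)%:E - (ft t x)%:E) <= 0)%E.
  rewrite integralB_EFin // eqZ // sube_le0.
  rewrite -(subnKC tu); exact: multi_le.
have ge1 : (0 <= \int[P]_(x in A) ((Z x)%:E - (ft t x)%:E))%E.
  apply: integral_ge0 => w Aw; rewrite lee_fin subr_ge0; apply: ltW; exact: Aw.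
have mh : measurable_fun A (fun x => ((Z x)%:E - (ft t x)%:E)%E).
  by apply: emeasurable_funB; [exact: measurable_int intZA | exact: measurable_int intfA].
have : (\int[P]_(x in A) `|(Z x)%:E - (ft t x)%:E| = 0)%E.
  have e0 : (\int[P]_(x in A) ((Z x)%:E - (ft t x)%:E) = 0)%E.
    by apply/eqP; rewrite eq_le le1 ge1.
  rewrite -[RHS]e0.
  apply: eq_integral => w /set_mem Aw; rewrite gee0_abs // lee_fin subr_ge0.
  apply: ltW; exact: Aw.
move/(ae_eq_integral_abs P mA mh) => H.
apply: filterS H => w /= H; rewrite leNgt; apply/negP => lt.
have := H lt; move/eqP; rewrite -EFinB eqe subr_eq0 => /eqP e.
by move: lt; rewrite e ltxx.
Qed.

End main.

Unset Implicit Arguments.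
Set Strict Implicit.

Theorem proposition6p11 (dT : measure_display) (T : measurableType dT) (R : realType)
  (P : probability T R) (d : nat) (F : mindex d -> set (set T))
  (X : mindex d -> T -> R) (s : mindex d) (Tt : nat -> T -> mindex d) :
  measure_is_complete P ->
  mfiltration P F ->
  supermartingale P (@mle d) F X ->
  allocation F s Tt ->
  supermartingale P (fun t u : nat => (t <= u)%N)
    (fun t => stopped_sigma F (Tt t)) (fun t w => X (Tt t w) w).
Proof.
move=> _ HF HX HT; split.
- move=> t; exact: (f_int HF HX HT t).
- move=> t; exact: (f_wrt HF HX HT t).
- move=> t u tu Z cZ; exact: (final_ae HF HX HT tu cZ).
Qed.
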